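(* Let $\theta^*\in\mathbb{R}^n$, let $\phi_1,\dots,\phi_N\in\mathbb{R}^n$ with $[\phi_1,\dots,\phi_N]$ of rank $n$, and $y_k:=\phi_k^T\theta^*$. For any $\beta>0$, $\gamma>0$ and $\mu\ge0$, with $$B(\theta,\mu):=\sum_{k=1}^N\frac{\phi_k}{1+\mu\phi_k^T\phi_k}\big(\phi_k^T\theta-y_k\big),$$ the point $(\theta^*,\theta^* )$ is uniformly globally asymptotically stable for the system in $(\theta,\vartheta)\in\mathbb{R}^{2n}$ $$\dot\theta=-\beta(\theta-\vartheta),\qquad\dot\vartheta=-\gamma B(\theta,\mu).$$
   Context: In the paper $\phi_k=\phi(t_k)$, $y_k=y^*(t_k)$ are recorded data samples. UGAS: uniformly globally stable (there is class-$\mathcal{K}_\infty$ $\kappa$ with $|x(t)-x^*|\le\kappa(|x_\circ-x^*|)$ for $t\ge t_\circ$) and uniformly globally attractive (for each $r,\sigma>0$ there is $T'>0$ with $|x_\circ-x^*|\le r\Rightarrow |x(t)-x^*|\le\sigma$ for $t\ge t_\circ+T'$). *)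

(* Defs.v *)
From HB Require Import structures.
From mathcomp Require Import all_boot all_order all_algebra.
From mathcomp Require Import all_classical all_reals all_analysis.
Set Implicit Arguments. Unset Strict Implicit. Unset Printing Implicit Defensive.
Import Order.TTheory GRing.Theory Num.Theory.
Import numFieldNormedType.Exports.
Local Open Scope classical_set_scope.
Local Open Scope ring_scope.

Section Defs.
Variables (R : realType) (n N : nat).

Definition dotv (u v : 'I_n -> R) : R := \sum_(i < n) u i * v i.

Definition data_matrix (phi : 'I_N -> 'I_n -> R) : 'M[R]_(n, N) :=
  \matrix_(i < n, k < N) phi k i.

Definition yk (phi : 'I_N -> 'I_n -> R) (thstar : 'I_n -> R) (k : 'I_N) : R :=
  dotv (phi k) thstar.

Definition Bvec (phi : 'I_N -> 'I_n -> R) (thstar : 'I_n -> R) (mu : R)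
  (theta : 'I_n -> R) : 'I_n -> R :=
  fun i => \sum_(k < N)
    phi k i / (1 + mu * dotv (phi k) (phi k)) * (dotv (phi k) theta - yk phi thstar k).

Definition state_dist (thstar theta vtheta : 'I_n -> R) : R :=
  Num.sqrt (\sum_(i < n) (theta i - thstar i) ^+ 2
            + \sum_(i < n) (vtheta i - thstar i) ^+ 2).

Definition is_solution (phi : 'I_N -> 'I_n -> R) (thstar : 'I_n -> R)
  (beta gamma mu t0 : R) (th vt : R -> 'I_n -> R) : Prop :=
  forall i : 'I_n,
    {within [set s | t0 <= s], continuous (fun s => th s i)} /\
    {within [set s | t0 <= s], continuous (fun s => vt s i)} /\
    (forall t, t0 < t ->
       is_derive t 1 (fun s => th s i) (- beta * (th t i - vt t i))) /\
    (forall t, t0 < t ->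
       is_derive t 1 (fun s => vt s i) (- gamma * Bvec phi thstar mu (th t) i)).

End Defs.

Definition class_Kinf (R : realType) (kappa : R -> R) : Prop :=
  {within [set x | 0 <= x], continuous kappa} /\
  kappa 0 = 0 /\
  (forall x y, 0 <= x -> x < y -> kappa x < kappa y) /\
  (forall M, exists x, 0 <= x /\ M <= kappa x).

Definition UGAS (R : realType) (n N : nat) (phi : 'I_N -> 'I_n -> R)
  (thstar : 'I_n -> R) (beta gamma mu : R) : Prop :=
  (exists kappa : R -> R, class_Kinf kappa /\
     forall (t0 : R) (th vt : R -> 'I_n -> R),
       is_solution phi thstar beta gamma mu t0 th vt ->
       forall t, t0 <= t ->
         state_dist thstar (th t) (vt t)
           <= kappa (state_dist thstar (th t0) (vt t0))) /\
  (forall r sigma : R, 0 < r -> 0 < sigma ->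
     exists T' : R, 0 < T' /\
       forall (t0 : R) (th vt : R -> 'I_n -> R),
         is_solution phi thstar beta gamma mu t0 th vt ->
         state_dist thstar (th t0) (vt t0) <= r ->
         forall t, t0 + T' <= t ->
           state_dist thstar (th t) (vt t) <= sigma).

(* Main.v *)
Require Import Defs.
From mathcomp Require Import all_boot all_order all_algebra.
From mathcomp Require Import all_classical all_reals all_analysis.
From mathcomp Require Import ring lra.
Import Order.TTheory GRing.Theory Num.Theory.
Module PA.
Import Order.TTheory GRing.Theory Num.Theory.
Import numFieldNormedType.Exports.
Local Open Scope classical_set_scope.
Local Open Scope ring_scope.
Set Implicit Arguments. Unset Strict Implicit. Unset Printing Implicit Defensive.

Section W.
Variable R : realType.
Implicit Types f g : R -> R.

Definition wc (A : set R) f := {within A, continuous f}.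

Lemma wcD A f g : wc A f -> wc A g -> wc A (fun s => f s + g s).
Proof. by move=> hf hg x; exact: (continuousD (hf x) (hg x)). Qed.
Lemma wcM A f g : wc A f -> wc A g -> wc A (fun s => f s * g s).
Proof. by move=> hf hg x; exact: (continuousM (hf x) (hg x)). Qed.
Lemma wcC A (c : R) : wc A (fun _ => c).
Proof. by move=> x; apply: cst_continuous. Qed.
Lemma wcN A f : wc A f -> wc A (fun s => - f s).
Proof. by move=> hf x; exact: (continuousN (hf x)). Qed.
Lemma wcB A f g : wc A f -> wc A g -> wc A (fun s => f s - g s).
Proof. by move=> hf hg; apply: wcD => //; apply: wcN. Qed.
Lemma wcS A m (h : 'I_m -> R -> R) : (forall i, wc A (h i)) ->
  wc A (fun s => \sum_(i < m) h i s).
Proof.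
move=> hh; rewrite -fct_sumE.
elim/big_ind: _ => //; first exact: wcC.
by move=> f g hf hg; apply: wcD.
Qed.


Lemma dC (t c : R) : is_derive t 1 (fun _ => c) 0.
Proof. exact: is_derive_cst. Qed.
Lemma dD (t : R) f g df dg : is_derive t 1 f df -> is_derive t 1 g dg ->
  is_derive t 1 (fun s => f s + g s) (df + dg).
Proof. by move=> hf hg; have := is_deriveD hf hg. Qed.
Lemma dN (t : R) f df : is_derive t 1 f df -> is_derive t 1 (fun s => - f s) (- df).
Proof. by move=> hf; have := is_deriveN hf. Qed.
Lemma dB (t : R) f g df dg : is_derive t 1 f df -> is_derive t 1 g dg ->
  is_derive t 1 (fun s => f s - g s) (df - dg).
Proof. by move=> hf hg; apply: dD => //; apply: dN. Qed.
Lemma dM (t : R) f g df dg : is_derive t 1 f df -> is_derive t 1 g dg ->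
  is_derive t 1 (fun s => f s * g s) (f t * dg + g t * df).
Proof. by move=> hf hg; have := is_deriveM hf hg. Qed.
Lemma dS (t : R) m (h : 'I_m -> R -> R) dh : (forall i, is_derive t 1 (h i) (dh i)) ->
  is_derive t 1 (fun s => \sum_(i < m) h i s) (\sum_(i < m) dh i).
Proof. by move=> hh; rewrite -fct_sumE; apply: is_derive_sum. Qed.
Lemma dK (t c : R) f df : is_derive t 1 f df -> is_derive t 1 (fun s => c * f s) (c * df).
Proof. move=> hf; have := dM (dC t c) hf; rewrite mulr0 addr0; exact. Qed.
End W.
Arguments wcD {R A f g} _ _ _.
Arguments wcM {R A f g} _ _ _.
Arguments wcC {R A} c _.
Arguments wcN {R A f} _ _.
Arguments wcB {R A f g} _ _ _.
Arguments wcS {R A m h} _ _.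
Section W2.
Variable R : realType.
Lemma dI (t : R) : is_derive t 1 (fun s : R => s) 1.
Proof. exact: is_derive_id. Qed.
Lemma wcI (A : set R) : wc A (fun s => s).
Proof. by move=> x; apply: continuous_subspaceT => y; exact: cvg_id. Qed.
End W2.
Arguments wcI {R A} _.

End PA.
Import PA.

Module PC.
Import Order.TTheory GRing.Theory Num.Theory.
Local Open Scope ring_scope.
Set Implicit Arguments. Unset Strict Implicit. Unset Printing Implicit Defensive.

Section CS.
Variable R : realType.

Lemma sumsq_ge0 m (a : 'I_m -> R) : 0 <= \sum_i a i * a i.
Proof. by apply: sumr_ge0 => i _; rewrite -expr2 sqr_ge0. Qed.

Lemma sqr_ge0' m (a : 'I_m -> R) j : 0 <= a j * a j.
Proof. by rewrite -expr2 sqr_ge0. Qed.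

Lemma CS m (a b : 'I_m -> R) :
  (\sum_i a i * b i) * (\sum_i a i * b i) <= (\sum_i a i * a i) * (\sum_i b i * b i).
Proof.
set A := \sum_i a i * a i; set B := \sum_i b i * b i; set P := \sum_i a i * b i.
have hA : 0 <= A by apply: sumsq_ge0.
have hB : 0 <= B by apply: sumsq_ge0.
have [A0|Apos] := eqVneq A 0.
  have a0 : forall i, a i = 0.
    move=> i; have h := psumr_eq0P (fun j (_ : true) => sqr_ge0' a j) A0.
    have /eqP := h i isT.
    by rewrite mulf_eq0 orbb => /eqP.
  have -> : P = 0 by rewrite /P big1 // => i _; rewrite a0 mul0r.
  by rewrite A0 !mul0r.
have Ap : 0 < A by rewrite lt_def Apos hA.
set t := P / A.
have key : 0 <= \sum_i (t * a i - b i) * (t * a i - b i) by apply: sumsq_ge0.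
have e1 : \sum_i (t * a i - b i) * (t * a i - b i) = t * t * A - 2 * t * P + B.
  rewrite /A /P /B mulr_sumr mulr_sumr -sumrB -big_split /=.
  by apply: eq_bigr => i _; ring.
have : t * t * A - 2 * t * P = - (P * P / A) by rewrite /t; field; rewrite Apos.
move=> ht; rewrite e1 in key.
have : P * P / A <= B by lra.
rewrite ler_pdivrMr // => h; lra.
Qed.
End CS.

End PC.
Import PC.

Module PD.
Import Order.TTheory GRing.Theory Num.Theory.
Local Open Scope ring_scope.
Set Implicit Arguments. Unset Strict Implicit. Unset Printing Implicit Defensive.

Section LA.
Variables (R : realType) (n N : nat) (phi : 'I_N -> 'I_n -> R) (mu : R).
Hypothesis hmu : 0 <= mu.

Definition ww k := (1 + mu * dotv (phi k) (phi k))^-1.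
Definition Qf (x : 'I_n -> R) := \sum_k ww k * (dotv (phi k) x * dotv (phi k) x).

Lemma dotv_ge0 (x : 'I_n -> R) : 0 <= dotv x x.
Proof. exact: sumsq_ge0. Qed.

Lemma den_ge1 k : 1 <= 1 + mu * dotv (phi k) (phi k).
Proof. have h2 := mulr_ge0 hmu (dotv_ge0 (phi k)). lra. Qed.

Lemma ww_gt0 k : 0 < ww k.
Proof. rewrite /ww invr_gt0; have := den_ge1 k; lra. Qed.

Lemma ww_le1 k : ww k <= 1.
Proof. rewrite /ww invr_le1 //; first exact: den_ge1.
- rewrite unitfE; have := den_ge1 k; lra.
- have := den_ge1 k; lra. Qed.

Lemma Qf_ge0 x : 0 <= Qf x.
Proof. apply: sumr_ge0 => k _; apply: mulr_ge0; [exact: (ltW (ww_gt0 k)) | by rewrite -expr2 sqr_ge0]. Qed.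

Lemma Q_upper x : Qf x <= (\sum_k dotv (phi k) (phi k)) * dotv x x.
Proof.
rewrite mulr_suml; apply: ler_sum => k _.
have h1 := CS (phi k) x.
have h2 := ww_le1 k; have h3 := ww_gt0 k.
have h4 : 0 <= dotv (phi k) x * dotv (phi k) x by rewrite -expr2 sqr_ge0.
rewrite /dotv in h1 h4 *; nra.
Qed.

Lemma Q_lower : \rank (data_matrix phi) = n ->
  exists2 m, 0 < m & forall x, m * dotv x x <= Qf x.
Proof.
move=> hr.
have /row_freeP [P hP] : row_free (data_matrix phi) by rewrite /row_free hr.
have [w0 dw0] : exists w0, w0 = (1 + mu * \sum_k dotv (phi k) (phi k))^-1 by eexists.
have [S dS] : exists S, S = \sum_j \sum_k P k j * P k j by eexists.
have hS : 0 <= S by rewrite dS; apply: sumr_ge0 => j _; apply: sumsq_ge0.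
have hC : 0 <= \sum_k dotv (phi k) (phi k) by apply: sumr_ge0 => k _; apply: dotv_ge0.
have w0p : 0 < w0 by rewrite dw0 invr_gt0; have := mulr_ge0 hmu hC; lra.
exists (w0 / (S + 1)); first by rewrite divr_gt0 //; lra.
move=> x.
have [y dy] : exists y, y = fun k => dotv (phi k) x by eexists.
have xe : forall j, x j = \sum_k y k * P k j.
  move=> j.
  have := congr1 (fun M : 'rV[R]_n => M 0 j) (congr1 (mulmx (\row_i x i)) hP).
  rewrite mulmx1 mulmxA !mxE /= => <-.
  apply: eq_bigr => k _; rewrite !mxE dy /dotv; congr (_ * _).
  by apply: eq_bigr => i _; rewrite !mxE mulrC.
have hE : dotv x x <= S * \sum_k y k * y k.
  rewrite /dotv dS mulr_suml; apply: ler_sum => j _.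
  rewrite xe; have := CS y (fun k => P k j); lra.
have hY : w0 * \sum_k y k * y k <= Qf x.
  rewrite /Qf mulr_sumr; apply: ler_sum => k _.
  have h1 : w0 <= ww k.
    rewrite dw0 /ww lef_pV2 ?posrE; first last.
    - by have := den_ge1 k; lra.
    - by have := mulr_ge0 hmu hC; lra.
    have : dotv (phi k) (phi k) <= \sum_k dotv (phi k) (phi k).
      by rewrite (bigD1 k) //= lerDl; apply: sumr_ge0 => i _; apply: dotv_ge0.
    move=> h; apply: lerD => //; exact: ler_wpM2l.
  have h0 := sqr_ge0' y k; rewrite dy in h0 *; nra.
have hY0 : 0 <= \sum_k y k * y k by apply: sumsq_ge0.
have hx0 := dotv_ge0 x.
rewrite mulrC mulrA ler_pdivrMr; last by lra.
nra.
Qed.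
End LA.

End PD.
Import PD.

Module PE.
Import Order.TTheory GRing.Theory Num.Theory.
Local Open Scope classical_set_scope.
Local Open Scope ring_scope.
Set Implicit Arguments. Unset Strict Implicit. Unset Printing Implicit Defensive.

Section Dyn.
Variables (R : realType) (n N : nat) (phi : 'I_N -> 'I_n -> R) (thstar : 'I_n -> R).
Variables (mu beta gamma : R).

Definition Bf (a b : 'I_n -> R) := \sum_k ww phi mu k * (dotv (phi k) a * dotv (phi k) b).

Lemma Bf_sym a b : Bf a b = Bf b a.
Proof. by apply: eq_bigr => k _; rewrite [_ * dotv _ b]mulrC. Qed.

Lemma Bf_Q a : Bf a a = Qf phi mu a.
Proof. by []. Qed.

Lemma yk_diff (th : 'I_n -> R) k :
  dotv (phi k) th - yk phi thstar k = dotv (phi k) (fun i => th i - thstar i).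
Proof. by rewrite /yk /dotv -sumrB; apply: eq_bigr => i _; rewrite mulrBr. Qed.

Lemma L1 (x th : 'I_n -> R) :
  \sum_i x i * Bvec phi thstar mu th i = Bf x (fun i => th i - thstar i).
Proof.
rewrite /Bvec /Bf.
under eq_bigr do rewrite mulr_sumr.
rewrite exchange_big /=; apply: eq_bigr => k _.
rewrite yk_diff [dotv (phi k) x]/dotv [in RHS]mulr_suml [in RHS]mulr_sumr.
by apply: eq_bigr => i _; rewrite /ww; ring.
Qed.

Variables (t0 : R) (th vt : R -> 'I_n -> R).
Hypothesis hsol : is_solution phi thstar beta gamma mu t0 th vt.

Definition ef s i := th s i - thstar i.
Definition zf s i := vt s i - th s i.

Section At.
Variable t : R.
Hypothesis ht : t0 < t.

Lemma de i : is_derive t 1 (fun s => ef s i) (beta * zf t i).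
Proof.
have [_ [_ [h _]]] := hsol i.
have := dB (h t ht) (dC t (thstar i)).
by rewrite /ef /zf subr0 => /is_derive_eq; apply; ring.
Qed.

Lemma dz i : is_derive t 1 (fun s => zf s i)
   (- gamma * Bvec phi thstar mu (th t) i - beta * zf t i).
Proof.
have [_ [_ [h1 h2]]] := hsol i.
have := dB (h2 t ht) (h1 t ht).
by rewrite /zf => /is_derive_eq; apply; ring.
Qed.

Lemma dDk k : is_derive t 1 (fun s => dotv (phi k) (ef s)) (beta * dotv (phi k) (zf t)).
Proof.
have h := dS (fun i => dK (phi k i) (de i)).
rewrite /dotv; apply: (is_derive_eq h).
by rewrite mulr_sumr; apply: eq_bigr => i _; ring.
Qed.

Lemma dQ : is_derive t 1 (fun s => Qf phi mu (ef s)) (2 * beta * Bf (ef t) (zf t)).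
Proof.
have h := dS (fun k => dK (ww phi mu k) (dM (dDk k) (dDk k))).
rewrite /Qf; apply: (is_derive_eq h).
by rewrite /Bf mulr_sumr; apply: eq_bigr => k _; ring.
Qed.

Lemma dZ : is_derive t 1 (fun s => dotv (zf s) (zf s))
  (- (2 * gamma) * Bf (zf t) (ef t) - 2 * beta * dotv (zf t) (zf t)).
Proof.
have h := dS (fun i => dM (dz i) (dz i)).
rewrite {1}/dotv; apply: (is_derive_eq h).
rewrite -L1 /dotv !mulr_sumr -sumrB.
by apply: eq_bigr => i _; ring.
Qed.

Lemma dP : is_derive t 1 (fun s => dotv (ef s) (zf s))
  (- gamma * Qf phi mu (ef t) - beta * dotv (ef t) (zf t) + beta * dotv (zf t) (zf t)).
Proof.
have h := dS (fun i => dM (de i) (dz i)).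
rewrite {1}/dotv; apply: (is_derive_eq h).
rewrite -Bf_Q -L1 /dotv !mulr_sumr -sumrB -big_split /=.
by apply: eq_bigr => i _; ring.
Qed.

Definition Vf (eps : R) s := gamma * Qf phi mu (ef s) + beta * dotv (zf s) (zf s)
  + eps * dotv (ef s) (zf s).

Lemma dV eps : is_derive t 1 (Vf eps)
  (- (2 * beta * beta) * dotv (zf t) (zf t) + eps * (beta * dotv (zf t) (zf t)
      - gamma * Qf phi mu (ef t) - beta * dotv (ef t) (zf t))).
Proof.
have h := dD (dD (dK gamma dQ) (dK beta dZ)) (dK eps dP).
apply: (is_derive_eq h).
rewrite Bf_sym; ring.
Qed.

End At.
Let A0 : set R := [set s : R | t0 <= s]%classic.

Lemma wce i : wc A0 (fun s => ef s i).
Proof. have [h _] := hsol i; exact: (wcB h (wcC (thstar i))). Qed.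
Lemma wcz i : wc A0 (fun s => zf s i).
Proof. have [h1 [h2 _]] := hsol i; exact: (wcB h2 h1). Qed.

Lemma wcdot (a b : 'I_n -> R -> R) : (forall i, wc A0 (a i)) -> (forall i, wc A0 (b i)) ->
  wc A0 (fun s => dotv (fun i => a i s) (fun i => b i s)).
Proof. move=> ha hb; rewrite /dotv; apply: wcS => i; exact: wcM. Qed.

Lemma wcV eps : wc A0 (Vf eps).
Proof.
rewrite /Vf; apply: wcD; first apply: wcD.
- apply: wcM; first exact: wcC.
  rewrite /Qf; apply: wcS => k; apply: wcM; first exact: wcC.
  apply: wcM; apply: (wcdot (a := fun i _ => phi k i)) => i; [exact: wcC | exact: wce|exact: wcC | exact: wce].
- apply: wcM; first exact: wcC.
  apply: (wcdot (a := fun i s => zf s i)) => i; exact: wcz.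
- apply: wcM; first exact: wcC.
  apply: (wcdot (a := fun i s => ef s i)) => i; [exact: wce | exact: wcz].
Qed.

Lemma decay eps c : 0 <= c -> (forall s, t0 <= s -> 0 <= Vf eps s) ->
  (forall t, t0 < t -> - (2 * beta * beta) * dotv (zf t) (zf t) + eps * (beta * dotv (zf t) (zf t)
      - gamma * Qf phi mu (ef t) - beta * dotv (ef t) (zf t)) <= - c * Vf eps t) ->
  forall t, t0 <= t -> Vf eps t * (1 + c * (t - t0)) <= Vf eps t0.
Proof.
move=> hc hV hD t ht.
set g := fun s => Vf eps s * (1 + c * (s - t0)).
have dg : forall x, t0 < x -> is_derive x 1 g (Vf eps x * (0 + c * (1 - 0)) +
    (1 + c * (x - t0)) * (- (2 * beta * beta) * dotv (zf x) (zf x) + eps * (beta * dotv (zf x) (zf x)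
      - gamma * Qf phi mu (ef x) - beta * dotv (ef x) (zf x)))).
  move=> x hx; exact: (dM (dV hx eps) (dD (dC x 1) (dK c (dB (dI x) (dC x t0))))).
have -> : Vf eps t0 = g t0 by rewrite /g subrr mulr0 addr0 mulr1.
apply: (@ler0_derive1_nincry _ g t0) => //.
- move=> x; rewrite in_itv /= andbT => hx; have H := dg x hx; exact: ex_derive.
- move=> x; rewrite in_itv /= andbT => hx; have H := dg x hx.
  rewrite derive1E derive_val.
  have h1 := hD x hx; have h2 := hV x (ltW hx).
  have h3 : 0 <= c * (x - t0) by apply: mulr_ge0 => //; lra.
  have h4 := mulr_ge0 (mulr_ge0 hc h3) h2.
  nra.
- have -> : [set` `[t0, +oo[%R] = A0.
    by apply/seteqP; split => x /=; rewrite in_itv /= andbT.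
  apply: wcM; first exact: wcV.
  apply: wcD; first exact: wcC.
  apply: wcM; first exact: wcC.
  apply: wcB; [exact: wcI | exact: wcC].
Qed.

End Dyn.

End PE.
Import PE.

Module PF.
Import Order.TTheory GRing.Theory Num.Theory.
Local Open Scope ring_scope.
Set Implicit Arguments. Unset Strict Implicit. Unset Printing Implicit Defensive.

Section S.
Variable R : realType.

Lemma scal_lower (b g p e E Z P Q : R) : 0 < b -> 0 < g -> 0 < p ->
  0 <= E -> 0 <= Z -> p * E <= g * Q -> e * (p + b) = p * b -> 0 < e ->
  0 <= E + 2 * P + Z -> 0 <= E - 2 * P + Z ->
  p / 2 * E + b / 2 * Z <= g * Q + b * Z + e * P.
Proof.
move=> hb hg hp hE hZ hQ he hep h1 h2.
have ep : e <= p by nra.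
have eb : e <= b by nra.
nra.
Qed.
Lemma scal_der (b g p e E Z P Q : R) : 0 < b -> 0 < g -> 0 < p ->
  0 <= E -> 0 <= Z -> p * E <= g * Q -> e * (p + b) = p * b -> 0 < e ->
  0 <= p * p * E + 2 * p * b * P + b * b * Z ->
  - (2 * b * b * Z) + e * (b * Z - g * Q - b * P) <= - (e * p / 2 * E) - b * b * Z.
Proof.
move=> hb hg hp hE hZ hQ he hep h.
have h1 : - (e * b * P) <= e * p / 2 * E + e * b * b / (2 * p) * Z.
  have : - (2 * p) * (e * b * P) <= e * p * p * E + e * b * b * Z by nra.
  move=> h2.
  have -> : e * p / 2 * E + e * b * b / (2 * p) * Z = (e * p * p * E + e * b * b * Z) / (2 * p).
    by field; rewrite gt_eqF.
  rewrite ler_pdivlMr; last by nra.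
  nra.
have h3 : e * b + e * b * b / (2 * p) <= b * b.
  have -> : e * b + e * b * b / (2 * p) = e * b * (2 * p + b) / (2 * p).
    by field; rewrite gt_eqF.
  rewrite ler_pdivrMr; last by nra.
  nra.
have h4 : e * g * Q >= e * p * E by nra.
nra.
Qed.

Lemma scal_all (b g m C e c k0 U E Z P Q : R) : 0 < b -> 0 < g -> 0 < m -> 0 <= C ->
  0 <= E -> 0 <= Z -> m * E <= Q -> Q <= C * E ->
  e * (g * m + b) = g * m * b ->
  k0 * (2 * (g * m + b)) = g * m * b ->
  U = g * C + b + 2 * e ->
  c * ((e * (g * m) / 2 + b * b) * U) = e * (g * m) / 2 * (b * b) ->
  0 <= E + 2 * P + Z -> 0 <= E - 2 * P + Z -> 0 <= 4 * E + 4 * P + Z ->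
  0 <= (g * m) * (g * m) * E + 2 * (g * m) * b * P + b * b * Z ->
  [/\ 0 < e, 0 < k0, 0 < U, 0 < c &
   [/\ 0 <= g * Q + b * Z + e * P,
       k0 * (2 * E + 2 * P + Z) <= 3 * (g * Q + b * Z + e * P),
       g * Q + b * Z + e * P <= 4 * U * (2 * E + 2 * P + Z) &
       - (2 * b * b) * Z + e * (b * Z - g * Q - b * P) <= - c * (g * Q + b * Z + e * P)]].
Proof.
move=> hb hg hm hC hE hZ hQ1 hQ2 he hk hU hc q1 q2 q3 q4.
have hp : 0 < g * m by apply: mulr_gt0.
set p := g * m in he hk hc q4 hp *.
have hpb : 0 < p + b by lra.
have ep : 0 < e.
  have : 0 < e * (p + b) by rewrite he; apply: mulr_gt0.
  by rewrite pmulr_lgt0.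
have k0p : 0 < k0.
  have : 0 < k0 * (2 * (p + b)) by rewrite hk; apply: mulr_gt0.
  by rewrite pmulr_lgt0 //; lra.
have hgQ : p * E <= g * Q by rewrite /p -mulrA; apply: ler_wpM2l => //; lra.
have hQC : g * Q <= g * C * E by rewrite -mulrA; apply: ler_wpM2l => //; lra.
have eb : e <= b by nra.
have epp : e <= p by nra.
have Up : 0 < U by rewrite hU; have := mulr_ge0 (ltW hg) hC; lra.
set x := e * p / 2.
have xp : 0 < x by rewrite /x; apply: divr_gt0 => //; apply: mulr_gt0.
have yp : 0 < b * b by apply: mulr_gt0.
have cp : 0 < c.
  have : 0 < c * ((x + b * b) * U) by rewrite hc; apply: mulr_gt0.
  by rewrite pmulr_lgt0 //; apply: mulr_gt0 => //; lra.
have low := scal_lower hb hg hp hE hZ hgQ he ep q1 q2.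
have der := scal_der hb hg hp hE hZ hgQ he ep q4.
have up : g * Q + b * Z + e * P <= U * (E + Z).
  have h1 := mulr_ge0 (mulr_ge0 (ltW hg) hC) hZ.
  have h2 := mulr_ge0 (ltW ep) q2.
  have h3 := mulr_ge0 (ltW ep) hE.
  have h4 := mulr_ge0 (ltW ep) hZ.
  have h5 := mulr_ge0 (ltW hb) hE.
  rewrite hU; nra.
split => //; split.
- have : 0 <= p / 2 * E + b / 2 * Z.
    by apply: addr_ge0; apply: mulr_ge0 => //; apply: divr_ge0 => //; lra.
  lra.
- have h1 : k0 * (2 * (p + b)) <= p * (2 * (p + b)) / 2 by rewrite hk; nra.
  have h2 : k0 * (2 * (p + b)) <= b * (2 * (p + b)) / 2 by rewrite hk; nra.
  have k1 : k0 <= p / 2.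
    rewrite -(ler_pM2r (_ : 0 < 2 * (p + b))); last by lra.
    by move: h1; rewrite mulrAC.
  have k2 : k0 <= b / 2.
    rewrite -(ler_pM2r (_ : 0 < 2 * (p + b))); last by lra.
    by move: h2; rewrite mulrAC.
  have : k0 * (E + Z) <= p / 2 * E + b / 2 * Z by nra.
  nra.
- nra.
- have cx : c * U <= x.
    have : c * U * (x + b * b) = x * (b * b) by rewrite /x -hc; ring.
    move=> h; nra.
  have cy : c * U <= b * b.
    have : c * U * (x + b * b) = x * (b * b) by rewrite /x -hc; ring.
    move=> h; nra.
  have : c * (g * Q + b * Z + e * P) <= c * U * (E + Z).
    by rewrite -mulrA; apply: ler_wpM2l => //; lra.
  rewrite /x in cx; nra.
Qed.
End S.

End PF.
Import PF.

Module PG.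
Import Order.TTheory GRing.Theory Num.Theory.
Local Open Scope classical_set_scope.
Local Open Scope ring_scope.
Set Implicit Arguments. Unset Strict Implicit. Unset Printing Implicit Defensive.

Section Fin.
Variable R : realType.

Lemma quad n (a b : 'I_n -> R) u v :
  0 <= u * u * dotv a a + 2 * u * v * dotv a b + v * v * dotv b b.
Proof.
have := sumsq_ge0 (fun i => u * a i + v * b i).
suff -> : \sum_i (u * a i + v * b i) * (u * a i + v * b i) =
  u * u * dotv a a + 2 * u * v * dotv a b + v * v * dotv b b by [].
rewrite /dotv !mulr_sumr -!big_split /=.
by apply: eq_bigr => i _; ring.
Qed.

Lemma dist_eq n (thstar : 'I_n -> R) th vt s :
  state_dist thstar (th s) (vt s) =
  Num.sqrt (2 * dotv (ef thstar th s) (ef thstar th s)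
    + 2 * dotv (ef thstar th s) (zf th vt s) + dotv (zf th vt s) (zf th vt s)).
Proof.
rewrite /state_dist; congr Num.sqrt.
rewrite /dotv !mulr_sumr -!big_split /=.
by apply: eq_bigr => i _; rewrite /ef /zf; ring.
Qed.

Lemma sqrt_le (a b K : R) : 0 <= a -> 0 <= b -> 0 <= K -> a <= K * K * b ->
  Num.sqrt a <= K * Num.sqrt b.
Proof.
move=> ha hb hK h.
rewrite -[K](@ger0_norm _ K) // -sqrtr_sqr -sqrtrM ?sqr_ge0 // ler_sqrt.
  by rewrite expr2.
by apply: mulr_ge0 => //; apply: sqr_ge0.
Qed.

Lemma sqrt_le1 (a s : R) : 0 <= a -> 0 <= s -> a <= s * s -> Num.sqrt a <= s.
Proof.
move=> ha hs h; have := @sqrt_le a 1 s ha ler01 hs; rewrite sqrtr1 !mulr1; exact.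
Qed.

Lemma sqrt_sq (a r : R) : 0 <= a -> Num.sqrt a <= r -> a <= r * r.
Proof.
move=> ha h; have h0 := sqrtr_ge0 a.
have := sqr_sqrtr ha; rewrite expr2 => <-.
nra.
Qed.
End Fin.

Section Fin2.
Variable R : realType.
Lemma final1 (Vt V0 Dt D0 k0 c K U t t0 : R) : 0 < k0 -> 0 < c -> 1 <= K ->
  K * k0 = k0 + 12 * U -> t0 <= t -> Vt * (1 + c * (t - t0)) <= V0 -> 0 <= Vt ->
  k0 * Dt <= 3 * Vt -> V0 <= 4 * U * D0 -> 0 <= D0 -> Dt <= K * K * D0.
Proof.
move=> k0p cp K1 hKk ht h1 hV hL hU hD0.
have h2 : 0 <= c * (t - t0) by apply: mulr_ge0; lra.
have h3 : Vt <= V0 by have := mulr_ge0 hV h2; lra.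
have h4 : k0 * Dt <= k0 * (K * D0).
  rewrite mulrA [k0 * K]mulrC hKk; have := mulr_ge0 (ltW k0p) hD0; lra.
have h5 : Dt <= K * D0 by rewrite -(ler_pM2l k0p).
have h6 : K * D0 <= K * K * D0 by rewrite -mulrA ler_peMl //; apply: mulr_ge0 => //; lra.
lra.
Qed.

Lemma final2 (Vt V0 Dt D0 k0 c U W r sigma t t0 : R) : 0 < k0 -> 0 < c -> 0 < W ->
  0 < sigma -> 0 < U -> W * (k0 * c * (sigma * sigma)) = 12 * U * (r * r) ->
  t0 + (1 + W) <= t -> Vt * (1 + c * (t - t0)) <= V0 -> 0 <= Vt ->
  k0 * Dt <= 3 * Vt -> V0 <= 4 * U * D0 -> D0 <= r * r -> Dt <= sigma * sigma.
Proof.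
move=> k0p cp Wp hs Up hW ht h1 hV hL hU hd.
have kcs : 0 < k0 * c * (sigma * sigma) by do 2?apply: mulr_gt0.
have h2 : c * W <= c * (t - t0) by rewrite ler_pM2l //; lra.
have h3 : Vt * (c * W) <= 4 * U * (r * r).
  have a1 := ler_wpM2l hV h2.
  have a2 : 4 * U * D0 <= 4 * U * (r * r) by apply: ler_wpM2l => //; lra.
  lra.
have h4 : k0 * Dt * (c * W) <= 12 * U * (r * r).
  have := ler_wpM2r (ltW (mulr_gt0 cp Wp)) hL; nra.
have h5 : Dt * (W * k0 * c) <= sigma * sigma * (W * k0 * c) by lra.
by move: h5; rewrite ler_pM2r //; do 2?apply: mulr_gt0.
Qed.
End Fin2.


End PG.
Import PG.

Unset Implicit Arguments. Set Strict Implicit.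
Local Open Scope ring_scope.

Theorem theorem5 (R : realType) (n N : nat)
  (thstar : 'I_n -> R) (phi : 'I_N -> 'I_n -> R)
  (hrank : \rank (data_matrix phi) = n)
  (beta gamma mu : R) (hbeta : 0 < beta) (hgamma : 0 < gamma) (hmu : 0 <= mu) :
  UGAS phi thstar beta gamma mu.
Proof.
have [m hm hQl] := Q_lower hmu hrank.
have [C dC] : exists C, C = \sum_k dotv (phi k) (phi k) by eexists.
have hC : 0 <= C by rewrite dC; apply: sumr_ge0 => k _; apply: dotv_ge0.
have hQu : forall x, Qf phi mu x <= C * dotv x x by move=> x; rewrite dC; apply: Q_upper.
have pp : 0 < gamma * m by apply: mulr_gt0.
have pb : 0 < gamma * m + beta by lra.
have [eps deps] : exists eps, eps = gamma * m * beta / (gamma * m + beta) by eexists.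
have epsp : 0 < eps by rewrite deps; apply: divr_gt0 => //; apply: mulr_gt0.
have he : eps * (gamma * m + beta) = gamma * m * beta by rewrite deps; field; rewrite gt_eqF.
have [k0 dk0] : exists k0, k0 = gamma * m * beta / (2 * (gamma * m + beta)) by eexists.
have hk : k0 * (2 * (gamma * m + beta)) = gamma * m * beta.
  by rewrite dk0; field; rewrite gt_eqF.
have [U dU] : exists U, U = gamma * C + beta + 2 * eps by eexists.
have Up : 0 < U by rewrite dU; have := mulr_ge0 (ltW hgamma) hC; lra.
have xp : 0 < eps * (gamma * m) / 2 + beta * beta.
  have := mulr_gt0 epsp pp; have := mulr_gt0 hbeta hbeta; lra.
have [c dc] : exists c, c = eps * (gamma * m) / 2 * (beta * beta) /
   ((eps * (gamma * m) / 2 + beta * beta) * U) by eexists.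
have hc : c * ((eps * (gamma * m) / 2 + beta * beta) * U) = eps * (gamma * m) / 2 * (beta * beta).
  rewrite dc; field; rewrite gt_eqF // gt_eqF //; have := mulr_gt0 epsp pp; have := mulr_gt0 hbeta hbeta; lra.
have FS : forall (th vt : R -> 'I_n -> R) s,
  let E := dotv (ef thstar th s) (ef thstar th s) in
  let Z := dotv (zf th vt s) (zf th vt s) in
  let P := dotv (ef thstar th s) (zf th vt s) in
  let Q := Qf phi mu (ef thstar th s) in
  [/\ 0 < eps, 0 < k0, 0 < U, 0 < c &
   [/\ 0 <= gamma * Q + beta * Z + eps * P,
       k0 * (2 * E + 2 * P + Z) <= 3 * (gamma * Q + beta * Z + eps * P),
       gamma * Q + beta * Z + eps * P <= 4 * U * (2 * E + 2 * P + Z) &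
       - (2 * beta * beta) * Z + eps * (beta * Z - gamma * Q - beta * P)
          <= - c * (gamma * Q + beta * Z + eps * P)]].
  move=> th vt s E Z P Q.
  apply: (scal_all hbeta hgamma hm hC (dotv_ge0 _) (dotv_ge0 _) (hQl _) (hQu _) he hk dU hc).
  - by have := quad (ef thstar th s) (zf th vt s) 1 1; rewrite /E /P /Z; lra.
  - by have := quad (ef thstar th s) (zf th vt s) 1 (-1); rewrite /E /P /Z; lra.
  - by have := quad (ef thstar th s) (zf th vt s) 2 1; rewrite /E /P /Z; lra.
  - exact: quad.
have D2ge0 : forall (th vt : R -> 'I_n -> R) s, 0 <= 2 * dotv (ef thstar th s) (ef thstar th s)
    + 2 * dotv (ef thstar th s) (zf th vt s) + dotv (zf th vt s) (zf th vt s).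
  move=> th vt s; have := quad (ef thstar th s) (zf th vt s) 1 1.
  have := dotv_ge0 (ef thstar th s); lra.
have := FS (fun _ => thstar) (fun _ => thstar) 0; cbv zeta => -[_ k0p _ cp _].
have [K dK] : exists K, K = 1 + 12 * U / k0 by eexists.
have K1 : 1 <= K.
  rewrite dK; have : 0 <= 12 * U / k0 by apply: divr_ge0; lra.
  lra.
have hKk : K * k0 = k0 + 12 * U by rewrite dK; field; rewrite gt_eqF.
have Vle : forall t0 (th vt : R -> 'I_n -> R), is_solution phi thstar beta gamma mu t0 th vt ->
    forall t, t0 <= t -> Vf phi thstar mu beta gamma th vt eps t * (1 + c * (t - t0))
      <= Vf phi thstar mu beta gamma th vt eps t0.
  move=> t0 th vt hsol; apply: (decay hsol (ltW cp)).
  - by move=> s _; have := FS th vt s; cbv zeta => -[_ _ _ _ [h _ _ _]].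
  - by move=> s _; have := FS th vt s; cbv zeta => -[_ _ _ _ [_ _ _ h]].
split.
- exists (fun r => K * r); split.
  + split; first by apply: wcM; [exact: wcC | exact: wcI].
    split; first by rewrite mulr0.
    split; first by move=> x y _ hxy; rewrite ltr_pM2l //; lra.
    move=> M; exists (`|M| / K); split; first by apply: divr_ge0 => //; lra.
    by rewrite mulrC divfK ?ler_norm // gt_eqF //; lra.
  + move=> t0 th vt hsol t ht; rewrite !dist_eq.
    have h1 := Vle t0 th vt hsol t ht.
    have := FS th vt t; cbv zeta => -[_ _ _ _ [V0 L0 _ _]].
    have := FS th vt t0; cbv zeta => -[_ _ _ _ [_ _ U0 _]].
    apply: sqrt_le; [exact: D2ge0 | exact: D2ge0 | lra |].
    exact: (final1 k0p cp K1 hKk ht h1 V0 L0 U0 (D2ge0 th vt t0)).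
- move=> r sigma hr hs.
  have [W dW] : exists W, W = 12 * U * (r * r) / (k0 * c * (sigma * sigma)) by eexists.
  have kcs : 0 < k0 * c * (sigma * sigma) by do 2?apply: mulr_gt0.
  have Wp : 0 < W by rewrite dW; apply: divr_gt0 => //; do 2?apply: mulr_gt0 => //; lra.
  have hW : W * (k0 * c * (sigma * sigma)) = 12 * U * (r * r).
    by rewrite dW divfK // gt_eqF.
  exists (1 + W); split; first by lra.
  move=> t0 th vt hsol hd0 t ht; rewrite dist_eq; rewrite dist_eq in hd0.
  have ht' : t0 <= t by lra.
  have h1 := Vle t0 th vt hsol t ht'.
  have := FS th vt t; cbv zeta => -[_ _ _ _ [V0 L0 _ _]].
  have := FS th vt t0; cbv zeta => -[_ _ _ _ [_ _ U0 _]].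
  have hd := sqrt_sq (D2ge0 th vt t0) hd0.
  apply: sqrt_le1; [exact: D2ge0 | lra |].
  exact: (final2 k0p cp Wp hs Up hW ht h1 V0 L0 U0 hd).
Qed.
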